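(* (1) Let $(Y^*,Y,X)$ be random variables with $Y^*,Y\in\{0,1\}$, $X=(\tilde X,Z)\in\mathcal X$, $\tilde X\in\tilde{\mathcal X}$, $Z$ taking values in a finite set $\mathcal Z$. Let $p(x)=\Pr(Y=1\mid X=x)$, $p^*(x)=\Pr(Y^*=1\mid X=x)$, $\underline p_z(\tilde x)=\inf_{z\in\mathcal Z}p(\tilde x,z)$, $\bar p_z(\tilde x)=\sup_{z\in\mathcal Z}p(\tilde x,z)$, $L_1(x)=\frac{p(x)-\underline p_z(\tilde x)}{1-\underline p_z(\tilde x)}$, $U_1(x)=\frac{p(x)}{\bar p_z(\tilde x)}$. Assume: for all $x=(\tilde x,z)$ and $y\in\{0,1\}$, $\Pr(Y=1-y\mid Y^*=y,X=x)=\Pr(Y=1-y\mid Y^*=y,\tilde X=\tilde x)$; for all $\tilde x$, $\Pr(Y=0\mid Y^*=1,\tilde x)+\Pr(Y=1\mid Y^*=0,\tilde x)\le1$; and for all $\tilde x$, $\bar p_z(\tilde x)>0$ and $\underline p_z(\tilde x)<1$. Then the sharp bounds for $p^*(x)$ are $[p(x),U_1(x)]$ when $\Pr(Y=1\mid Y^*=0,\tilde x)=0$, and $[L_1(x),p(x)]$ when $\Pr(Y=0\mid Y^*=1,\tilde x)=0$. (2) Let $(Y^*,Y,X,W)$ be random variables with $Y^*,Y\in\{0,1\}$, $X\in\mathcal X$, $W$ taking values in a finite set of reals $\mathcal W$. Let $p^*(x)=\Pr(Y^*=1\mid X=x)$, $p_W(x,w)=\Pr(Y=1\mid X=x,W=w)$,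 $\underline p_w(x,w)=\inf_{\tilde w\le w}p_W(x,\tilde w)$, $\bar p_w(x,w)=\sup_{\tilde w\le w}p_W(x,\tilde w)$ (over $\tilde w\in\mathcal W$), $L_2(x)=\sup_{w\in\mathcal W}\frac{p_W(x,w)-\underline p_w(x,w)}{1-\underline p_w(x,w)}$, $U_2(x)=\inf_{w\in\mathcal W}\frac{p_W(x,w)}{\bar p_w(x,w)}$. Assume: $\Pr(Y^*=1\mid x,w)=p^*(x)$ for all $x,w$; for all $x$, $y\in\{0,1\}$ and $w_1>w_2$ in $\mathcal W$, $\Pr(Y=1-y\mid Y^*=y,x,w_1)\le\Pr(Y=1-y\mid Y^*=y,x,w_2)$; for all $x,w$, $\Pr(Y=1\mid Y^*=0,x,w)+\Pr(Y=0\mid Y^*=1,x,w)\le1$ and $0<p_W(x,w)<1$. Then the sharp bounds for $p^*(x)$ are $[\sup_{w\in\mathcal W}p_W(x,w),U_2(x)]$ when $\Pr(Y=1\mid Y^*=0,x,w)=0$, and $[L_2(x),\inf_{w\in\mathcal W}p_W(x,w)]$ when $\Pr(Y=0\mid Y^*=1,x,w)=0$.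
   Context: $Y^*$ is the true (unobserved) binary outcome and $Y$ the observed, possibly misreported outcome; conditioning on $\tilde x$ (resp. $x,w$) means conditioning on $\tilde X=\tilde x$ (resp. $X=x,W=w$). ''Sharp'' means no tighter bounds on $p^*(x)$ are implied by the assumptions and the distribution of the observed variables. *)

(* Defs.v *)
From HB Require Import structures.
From mathcomp Require Import all_boot all_order all_algebra.
Set Implicit Arguments. Unset Strict Implicit. Unset Printing Implicit Defensive.
Import Order.TTheory GRing.Theory Num.Theory.
Local Open Scope ring_scope.

(* Part (1): X = (Xt, Z), Z finite.  Model primitives:                *)
(*   ps xt z  = p*(xt,z) = Pr(Y*=1 | X=(xt,z))                         *)
(*   a0 xt    = Pr(Y=1 | Y*=0, Xt=xt)   (= Pr(Y=1|Y*=0,X=(xt,z)), all z) *)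
(*   a1 xt    = Pr(Y=0 | Y*=1, Xt=xt)   (= Pr(Y=0|Y*=1,X=(xt,z)), all z) *)
(* The misclassification rates depend on xt only: this encodes the    *)
(* assumption Pr(Y=1-y|Y*=y,X=x) = Pr(Y=1-y|Y*=y,Xt=xt).               *)

Section Part1.
Variables (R : realFieldType) (Xt : Type) (Z : finType).

Definition valid1 (ps : Xt -> Z -> R) (a0 a1 : Xt -> R) : Prop :=
  (forall xt z, 0 <= ps xt z <= 1) /\
  (forall xt, [/\ 0 <= a0 xt <= 1, 0 <= a1 xt <= 1 & a0 xt + a1 xt <= 1]).

(* Pr(Y=1 | X=(xt,z)) implied by the latent model (law of total prob.) *)
Definition obs1 (ps : Xt -> Z -> R) (a0 a1 : Xt -> R) (xt : Xt) (z : Z) : R :=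
  a0 xt * (1 - ps xt z) + (1 - a1 xt) * ps xt z.

Definition generates1 (p : Xt -> Z -> R) ps a0 a1 : Prop :=
  forall xt z, p xt z = obs1 ps a0 a1 xt z.

(* sup_z / inf_z of p(xt, .) over the finite nonempty set Z (z0 : Z   *)
(* only serves as the starting value of the fold).                   *)
Definition psupZ (p : Xt -> Z -> R) (xt : Xt) (z0 : Z) : R :=
  \big[Num.max/p xt z0]_(z : Z) p xt z.
Definition pinfZ (p : Xt -> Z -> R) (xt : Xt) (z0 : Z) : R :=
  \big[Num.min/p xt z0]_(z : Z) p xt z.

Definition L1 (p : Xt -> Z -> R) (xt : Xt) (z : Z) : R :=
  (p xt z - pinfZ p xt z) / (1 - pinfZ p xt z).
Definition U1 (p : Xt -> Z -> R) (xt : Xt) (z : Z) : R :=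
  p xt z / psupZ p xt z.

(* Identified set for p*(xt,z) under the extra restriction that       *)
(* Pr(Y=1|Y*=0,xt) = 0 (resp. Pr(Y=0|Y*=1,xt) = 0).                    *)
Definition ident1_no_fp (p : Xt -> Z -> R) (xt : Xt) (z : Z) (s : R) : Prop :=
  exists ps a0 a1, [/\ valid1 ps a0 a1, generates1 p ps a0 a1, a0 xt = 0
                     & ps xt z = s].
Definition ident1_no_fn (p : Xt -> Z -> R) (xt : Xt) (z : Z) (s : R) : Prop :=
  exists ps a0 a1, [/\ valid1 ps a0 a1, generates1 p ps a0 a1, a1 xt = 0
                     & ps xt z = s].
End Part1.

(* Part (2): W takes values in the finite set of reals Ws (a seq).    *)
(*   ps x     = p*(x) = Pr(Y*=1 | X=x) = Pr(Y*=1 | X=x, W=w)  for all w *)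
(*   a0 x w   = Pr(Y=1 | Y*=0, X=x, W=w)                               *)
(*   a1 x w   = Pr(Y=0 | Y*=1, X=x, W=w)                               *)

Section Part2.
Variables (R : realFieldType) (X : Type).

Definition valid2 (Ws : seq R) (ps : X -> R) (a0 a1 : X -> R -> R) : Prop :=
  [/\ (forall x, 0 <= ps x <= 1),
      (forall x w, w \in Ws ->
         [/\ 0 <= a0 x w <= 1, 0 <= a1 x w <= 1 & a0 x w + a1 x w <= 1])
    & (forall x w1 w2, w1 \in Ws -> w2 \in Ws -> w2 < w1 ->
         a0 x w1 <= a0 x w2 /\ a1 x w1 <= a1 x w2)].

Definition obs2 (ps : X -> R) (a0 a1 : X -> R -> R) (x : X) (w : R) : R :=
  a0 x w * (1 - ps x) + (1 - a1 x w) * ps x.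

Definition generates2 (Ws : seq R) (pW : X -> R -> R) ps a0 a1 : Prop :=
  forall x w, w \in Ws -> pW x w = obs2 ps a0 a1 x w.

(* sup / inf over w in Ws (Ws nonempty; head is the fold's start). *)
Definition supW (Ws : seq R) (f : R -> R) : R :=
  \big[Num.max/f (head 0 Ws)]_(w <- Ws) f w.
Definition infW (Ws : seq R) (f : R -> R) : R :=
  \big[Num.min/f (head 0 Ws)]_(w <- Ws) f w.

Definition pbar_w (Ws : seq R) (pW : X -> R -> R) (x : X) (w : R) : R :=
  \big[Num.max/pW x w]_(wt <- Ws | wt <= w) pW x wt.
Definition plow_w (Ws : seq R) (pW : X -> R -> R) (x : X) (w : R) : R :=
  \big[Num.min/pW x w]_(wt <- Ws | wt <= w) pW x wt.

Definition L2 (Ws : seq R) (pW : X -> R -> R) (x : X) : R :=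
  supW Ws (fun w => (pW x w - plow_w Ws pW x w) / (1 - plow_w Ws pW x w)).
Definition U2 (Ws : seq R) (pW : X -> R -> R) (x : X) : R :=
  infW Ws (fun w => pW x w / pbar_w Ws pW x w).

Definition ident2_no_fp (Ws : seq R) (pW : X -> R -> R) (x : X) (s : R) : Prop :=
  exists ps a0 a1, [/\ valid2 Ws ps a0 a1, generates2 Ws pW ps a0 a1,
                      (forall w, w \in Ws -> a0 x w = 0) & ps x = s].
Definition ident2_no_fn (Ws : seq R) (pW : X -> R -> R) (x : X) (s : R) : Prop :=
  exists ps a0 a1, [/\ valid2 Ws ps a0 a1, generates2 Ws pW ps a0 a1,
                      (forall w, w \in Ws -> a1 x w = 0) & ps x = s].
End Part2.

(* Main.v *)
Require Import Defs.
From HB Require Import structures.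
From mathcomp Require Import all_boot all_order all_algebra.
From mathcomp Require Import ring lra.
From Stdlib Require Import ClassicalEpsilon.
Import Order.TTheory GRing.Theory Num.Theory.
Local Open Scope ring_scope.

Section P1.
Variables (R : realFieldType) (Xt : Type) (Z : finType).

Lemma obs1_range (p : Xt -> Z -> R) ps a0 a1 :
  valid1 ps a0 a1 -> generates1 p ps a0 a1 -> forall xt z, 0 <= p xt z <= 1.
Proof.
move=> [Hps Ha] Hg xt z; rewrite Hg /obs1.
have /andP[h1 h2] := Hps xt z; have [/andP[h3 h4] /andP[h5 h6] h7] := Ha xt.
apply/andP; split; nra.
Qed.

Lemma glue1 (p : Xt -> Z -> R) ps0 a00 a10 xt (f : Z -> R) b0 b1 :
  valid1 ps0 a00 a10 -> generates1 p ps0 a00 a10 ->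
  (forall z, 0 <= f z <= 1) -> 0 <= b0 <= 1 -> 0 <= b1 <= 1 -> b0 + b1 <= 1 ->
  (forall z, p xt z = b0 * (1 - f z) + (1 - b1) * f z) ->
  exists ps a0 a1, [/\ valid1 ps a0 a1, generates1 p ps a0 a1,
     ps xt = f, a0 xt = b0 & a1 xt = b1].
Proof.
move=> [Hps Ha] Hg Hf Hb0 Hb1 Hb Hp.
pose ps xt' := if excluded_middle_informative (xt' = xt) then f else ps0 xt'.
pose a0 xt' := if excluded_middle_informative (xt' = xt) then b0 else a00 xt'.
pose a1 xt' := if excluded_middle_informative (xt' = xt) then b1 else a10 xt'.
exists ps, a0, a1; split.
- split=> [xt' z|xt']; rewrite /ps /a0 /a1;
    destruct (excluded_middle_informative (xt' = xt)) => //; first [exact: Hf | exact: Hps | by split | exact: Ha].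
- move=> xt' z; rewrite /obs1 /ps /a0 /a1;
    destruct (excluded_middle_informative (xt' = xt)) as [->|] => //; apply: Hg.
- by rewrite /ps; destruct (excluded_middle_informative (xt = xt)).
- by rewrite /a0; destruct (excluded_middle_informative (xt = xt)).
- by rewrite /a1; destruct (excluded_middle_informative (xt = xt)).
Qed.

Lemma part1_fp (p : Xt -> Z -> R) :
  (forall (xt : Xt) (z0 : Z), 0 < psupZ p xt z0 /\ pinfZ p xt z0 < 1) ->
  forall (xt : Xt) (z : Z),
  (exists ps a0 a1, [/\ valid1 ps a0 a1, generates1 p ps a0 a1 & a0 xt = 0]) ->
  forall s : R, ident1_no_fp p xt z s <-> p xt z <= s <= U1 p xt z.
Proof.
move=> Hb xt z [ps0 [a00 [a10 [Hv0 Hg0 _]]]] s.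
have Hr := @obs1_range p _ _ _ Hv0 Hg0.
have [HM _] := Hb xt z.
set M := psupZ p xt z in HM *.
have HpM : forall z', p xt z' <= M by move=> z'; exact: le_bigmax.
rewrite /U1 -/M; split.
- move=> [ps [a0 [a1 [[Hps Ha] Hg H0 <-]]]].
  have [/andP[h3 h4] /andP[h5 h6] h7] := Ha xt.
  have Hp : forall z', p xt z' = (1 - a1 xt) * ps xt z'.
    by move=> z'; rewrite Hg /obs1 H0; ring.
  have HMc : M <= 1 - a1 xt.
    by apply: bigmax_le => [|i _]; rewrite Hp; [have := Hps xt z | have := Hps xt i]; nra.
  have /andP[h1 h2] := Hps xt z.
  apply/andP; split; first by rewrite Hp; nra.
  rewrite ler_pdivlMr // Hp; nra.
- move=> /andP[h1 h2].
  have /andP[hp0 hp1] := Hr xt z.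
  pose c := if s == 0 then M else p xt z / s.
  have [Hc1 Hc2 Hcs] : [/\ M <= c, c <= 1 & p xt z / c = s].
    rewrite /c; case: eqP => [s0|/eqP sn0].
      have p0 : p xt z = 0 by rewrite s0 in h1; apply/le_anti/andP.
      split=> //; last by rewrite p0 s0 mul0r.
      by apply: bigmax_le => [|i _]; [case/andP: (Hr xt z) | case/andP: (Hr xt i)].
    have s0 : 0 < s by rewrite lt_def sn0 /= (le_trans hp0 h1).
    rewrite ler_pdivlMr // in h2.
    have pn0 : p xt z != 0.
      by apply/eqP=> p0; rewrite p0 in h2; nra.
    split.
    - by rewrite ler_pdivlMr //; nra.
    - by rewrite ler_pdivrMr //; nra.
    - by rewrite invf_div; field.
  have c0 : 0 < c by exact: (lt_le_trans HM Hc1).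
  have := @glue1 p ps0 a00 a10 xt (fun z' => p xt z' / c) 0 (1 - c) Hv0 Hg0.
  case.
  + move=> z'; have := Hr xt z'; have := HpM z' => h3 /andP[h4 h5].
    apply/andP; split; first by apply: divr_ge0; lra.
    by rewrite ler_pdivrMr //; lra.
  + by rewrite lexx ler01.
  + apply/andP; split; lra.
  + lra.
  + by move=> z'; rewrite mul0r add0r opprB addrC subrK mulrCA divff ?mulr1 ?(gt_eqF c0).
  move=> ps [a0 [a1 [Hv Hg Hps H0 H1]]].
  by exists ps, a0, a1; split => //; rewrite Hps.
Qed.

Lemma part1_fn (p : Xt -> Z -> R) :
  (forall (xt : Xt) (z0 : Z), 0 < psupZ p xt z0 /\ pinfZ p xt z0 < 1) ->
  forall (xt : Xt) (z : Z),
  (exists ps a0 a1, [/\ valid1 ps a0 a1, generates1 p ps a0 a1 & a1 xt = 0]) ->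
  forall s : R, ident1_no_fn p xt z s <-> L1 p xt z <= s <= p xt z.
Proof.
move=> Hb xt z [ps0 [a00 [a10 [Hv0 Hg0 _]]]] s.
have Hr := @obs1_range p _ _ _ Hv0 Hg0.
have [_ Hm] := Hb xt z.
set m := pinfZ p xt z in Hm *.
have HpM : forall z', m <= p xt z' by move=> z'; exact: bigmin_le.
have Hm0 : 0 <= m.
  by apply: le_bigmin => [|i _]; [case/andP: (Hr xt z) | case/andP: (Hr xt i)].
rewrite /L1 -/m; split.
- move=> [ps [a0 [a1 [[Hps Ha] Hg H1 <-]]]].
  have [/andP[h3 h4] /andP[h5 h6] h7] := Ha xt.
  have Hp : forall z', p xt z' = a0 xt + (1 - a0 xt) * ps xt z'.
    by move=> z'; rewrite Hg /obs1 H1; ring.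
  have HMc : a0 xt <= m.
    by apply: le_bigmin => [|i _]; rewrite Hp; [have := Hps xt z | have := Hps xt i]; nra.
  have /andP[h1 h2] := Hps xt z.
  apply/andP; split; last by rewrite Hp; nra.
  rewrite ler_pdivrMr ?subr_gt0 // Hp; nra.
- move=> /andP[h1 h2].
  have /andP[hp0 hp1] := Hr xt z.
  pose d := if s == 1 then 1 - m else (1 - p xt z) / (1 - s).
  have [Hc1 Hc2 Hcs] : [/\ 1 - m <= d, d <= 1 & 1 - (1 - p xt z) / d = s].
    rewrite /d; case: eqP => [s0|/eqP sn0].
      have p0 : p xt z = 1 by rewrite s0 in h2; apply/le_anti/andP.
      split=> //; last by rewrite p0 s0 subrr mul0r subr0.
      have := HpM z; lra.
    have s0 : 0 < 1 - s by rewrite subr_gt0 lt_def eq_sym sn0 /= (le_trans h2 hp1).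
    rewrite ler_pdivrMr ?subr_gt0 // in h1.
    have pn0 : 1 - p xt z != 0.
      apply/eqP=> p0; have p1 : p xt z = 1 by lra.
      rewrite p1 in h1; nra.
    split.
    - by rewrite ler_pdivlMr //; nra.
    - by rewrite ler_pdivrMr //; nra.
    - by rewrite invf_div; field.
  have c0 : 0 < d by have := HpM z; lra.
  have := @glue1 p ps0 a00 a10 xt (fun z' => 1 - (1 - p xt z') / d) (1 - d) 0 Hv0 Hg0.
  case.
  + move=> z'; have := Hr xt z'; have := HpM z' => h3 /andP[h4 h5].
    apply/andP; split; last by rewrite lerBlDr lerDl; apply: divr_ge0; lra.
    by rewrite subr_ge0 ler_pdivrMr //; lra.
  + apply/andP; split; lra.
  + by rewrite lexx ler01.
  + lra.
  + by move=> z'; field; rewrite gt_eqF.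
  move=> ps [a0 [a1 [Hv Hg Hps H0 H1]]].
  by exists ps, a0, a1; split => //; rewrite Hps.
Qed.
End P1.

Section P2.
Variables (R : realFieldType) (X : Type).

Lemma glue2 (Ws : seq R) (pW : X -> R -> R) ps0 a00 a10 x (t : R) (g0 g1 : R -> R) :
  valid2 Ws ps0 a00 a10 -> generates2 Ws pW ps0 a00 a10 -> 0 <= t <= 1 ->
  (forall w, w \in Ws -> [/\ 0 <= g0 w <= 1, 0 <= g1 w <= 1 & g0 w + g1 w <= 1]) ->
  (forall w1 w2, w1 \in Ws -> w2 \in Ws -> w2 < w1 -> g0 w1 <= g0 w2 /\ g1 w1 <= g1 w2) ->
  (forall w, w \in Ws -> pW x w = g0 w * (1 - t) + (1 - g1 w) * t) ->
  exists ps a0 a1, [/\ valid2 Ws ps a0 a1, generates2 Ws pW ps a0 a1,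
     ps x = t, a0 x = g0 & a1 x = g1].
Proof.
move=> [Hps Ha Hm] Hg Ht Hb Hgm Hp.
pose ps x' := if excluded_middle_informative (x' = x) then t else ps0 x'.
pose a0 x' := if excluded_middle_informative (x' = x) then g0 else a00 x'.
pose a1 x' := if excluded_middle_informative (x' = x) then g1 else a10 x'.
exists ps, a0, a1; split.
- split=> [x'|x' w|x' w1 w2]; rewrite /ps /a0 /a1;
    destruct (excluded_middle_informative (x' = x)) => //;
    first [exact: Ht | exact: Hps | exact: Hb | exact: Ha | exact: Hgm | exact: Hm].
- move=> x' w; rewrite /obs2 /ps /a0 /a1;
    destruct (excluded_middle_informative (x' = x)) as [->|] => //; [exact: Hp | exact: Hg].
- by rewrite /ps; destruct (excluded_middle_informative (x = x)).
- by rewrite /a0; destruct (excluded_middle_informative (x = x)).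
- by rewrite /a1; destruct (excluded_middle_informative (x = x)).
Qed.

Lemma head_in (Ws : seq R) : Ws != [::] -> head 0 Ws \in Ws.
Proof. by case: Ws => // h t _; exact: mem_head. Qed.

Lemma part2_fp (Ws : seq R) (pW : X -> R -> R) :
  Ws != [::] ->
  (forall (x : X) (w : R), w \in Ws -> 0 < pW x w < 1) ->
  forall x : X,
  (exists ps a0 a1, [/\ valid2 Ws ps a0 a1, generates2 Ws pW ps a0 a1
                       & forall w, w \in Ws -> a0 x w = 0]) ->
  forall s : R, ident2_no_fp Ws pW x s <-> supW Ws (pW x) <= s <= U2 Ws pW x.
Proof.
move=> Wn0 Hr x [ps0 [a00 [a10 [[Hps0 Ha0 Hm0] Hg0 H00]]]] s.
have hW := @head_in Ws Wn0.
set h := head 0 Ws in hW.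
have Hmono : forall w1 w2, w1 \in Ws -> w2 \in Ws -> w2 <= w1 -> pW x w2 <= pW x w1.
  move=> w1 w2 w1W w2W; rewrite le_eqVlt => /orP[/eqP->//|lt].
  have [_ h2] := Hm0 x w1 w2 w1W w2W lt.
  rewrite (Hg0 x w1 w1W) (Hg0 x w2 w2W) /obs2 (H00 w1 w1W) (H00 w2 w2W).
  have /andP[u1 u2] := Hps0 x; nra.
have Hbar : forall w, w \in Ws -> pbar_w Ws pW x w = pW x w.
  move=> w wW; apply/le_anti/andP; split; last exact: bigmax_ge_id.
  rewrite /pbar_w big_seq_cond; apply: bigmax_le => // wt /andP[wtW wtw].
  exact: Hmono.
have Hratio : forall w, w \in Ws -> pW x w / pbar_w Ws pW x w = 1.
  move=> w wW; rewrite Hbar // divff //; have /andP[] := Hr x w wW.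
  by move=> /gt_eqF ->.
split.
- move=> [ps [a0 [a1 [[Hps Ha Hm] Hg H0 <-]]]].
  have /andP[s0 s1] := Hps x.
  apply/andP; split.
  + rewrite /supW -/h big_seq; apply: bigmax_le => [|w wW];
      [rewrite (Hg x h hW) /obs2 (H0 h hW) | rewrite (Hg x w wW) /obs2 (H0 w wW)];
      [have [_ /andP[u1 u2] _] := Ha x h hW | have [_ /andP[u1 u2] _] := Ha x w wW]; nra.
  + rewrite /U2 /infW -/h big_seq; apply: le_bigmin => [|w wW]; by rewrite Hratio.
- move=> /andP[h1 h2].
  have sp : pW x h <= s by apply: le_trans h1; exact: bigmax_ge_id.
  have s1 : s <= 1.
    apply: (le_trans h2); apply: le_trans (bigmin_le_id _ _ _ _) _.
    by rewrite Hratio.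
  have hp := Hr x h hW.
  have s0 : 0 < s by case/andP: hp => hp _; exact: lt_le_trans sp.
  have sw : forall w, w \in Ws -> pW x w <= s.
    move=> w wW; apply: le_trans h1; exact: le_bigmax_seq.
  have := @glue2 Ws pW ps0 a00 a10 x s (fun _ => 0) (fun w => 1 - pW x w / s)
           (And3 Hps0 Ha0 Hm0) Hg0.
  case.
  + by apply/andP; split=> //; exact: ltW.
  + move=> w wW; have := sw w wW; have /andP[u1 u2] := Hr x w wW => u3.
    have q1 : pW x w / s <= 1 by rewrite ler_pdivrMr // mul1r.
    have q0 : 0 <= pW x w / s by apply: divr_ge0; [exact: ltW | exact: ltW].
    split; first by rewrite lexx ler01.
    * apply/andP; split; lra.
    * lra.
  + move=> w1 w2 w1W w2W lt; split=> //.
    rewrite lerD2l lerN2 ler_pM2r ?invr_gt0 //; apply: Hmono => //; exact: ltW.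
  + by move=> w wW; field; rewrite gt_eqF.
  move=> ps [a0 [a1 [Hv Hg Hps H0 H1]]].
  by exists ps, a0, a1; split => // w _; rewrite H0.
Qed.

Lemma part2_fn (Ws : seq R) (pW : X -> R -> R) :
  Ws != [::] ->
  (forall (x : X) (w : R), w \in Ws -> 0 < pW x w < 1) ->
  forall x : X,
  (exists ps a0 a1, [/\ valid2 Ws ps a0 a1, generates2 Ws pW ps a0 a1
                       & forall w, w \in Ws -> a1 x w = 0]) ->
  forall s : R, ident2_no_fn Ws pW x s <-> L2 Ws pW x <= s <= infW Ws (pW x).
Proof.
move=> Wn0 Hr x [ps0 [a00 [a10 [[Hps0 Ha0 Hm0] Hg0 H10]]]] s.
have hW := @head_in Ws Wn0.
set h := head 0 Ws in hW.
have Hmono : forall w1 w2, w1 \in Ws -> w2 \in Ws -> w2 <= w1 -> pW x w1 <= pW x w2.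
  move=> w1 w2 w1W w2W; rewrite le_eqVlt => /orP[/eqP->//|lt].
  have [h2 _] := Hm0 x w1 w2 w1W w2W lt.
  rewrite (Hg0 x w1 w1W) (Hg0 x w2 w2W) /obs2 (H10 w1 w1W) (H10 w2 w2W).
  have /andP[u1 u2] := Hps0 x; nra.
have Hlow : forall w, w \in Ws -> plow_w Ws pW x w = pW x w.
  move=> w wW; apply/le_anti/andP; split; first exact: bigmin_le_id.
  rewrite /plow_w big_seq_cond; apply: le_bigmin => // wt /andP[wtW wtw].
  exact: Hmono.
have Hratio : forall w, w \in Ws ->
    (pW x w - plow_w Ws pW x w) / (1 - plow_w Ws pW x w) = 0.
  by move=> w wW; rewrite Hlow // subrr mul0r.
split.
- move=> [ps [a0 [a1 [[Hps Ha Hm] Hg H1 <-]]]].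
  have /andP[s0 s1] := Hps x.
  apply/andP; split.
  + rewrite /L2 /supW -/h big_seq; apply: bigmax_le => [|w wW]; by rewrite Hratio.
  + rewrite /infW -/h big_seq; apply: le_bigmin => [|w wW];
      [rewrite (Hg x h hW) /obs2 (H1 h hW) | rewrite (Hg x w wW) /obs2 (H1 w wW)];
      [have [/andP[u1 u2] _ _] := Ha x h hW | have [/andP[u1 u2] _ _] := Ha x w wW]; nra.
- move=> /andP[h1 h2].
  have sp : s <= pW x h by apply: le_trans h2 _; exact: bigmin_le_id.
  have hp := Hr x h hW.
  have s0 : 0 <= s.
    apply: le_trans h1; apply: le_trans (bigmax_ge_id _ _ _ _).
    have q1 : plow_w Ws pW x h <= pW x h by exact: bigmin_le_id.
    case/andP: hp => u1 u2.
    by apply: divr_ge0; lra.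
  have s1 : s < 1 by case/andP: hp => _ hp; exact: le_lt_trans hp.
  have sw : forall w, w \in Ws -> s <= pW x w.
    move=> w wW; apply: le_trans h2 _; exact: ge_bigmin_seq.
  have s1' : 0 < 1 - s by lra.
  have := @glue2 Ws pW ps0 a00 a10 x s (fun w => 1 - (1 - pW x w) / (1 - s)) (fun _ => 0)
           (And3 Hps0 Ha0 Hm0) Hg0.
  case.
  + by apply/andP; split=> //; exact: ltW.
  + move=> w wW; have := sw w wW; have /andP[u1 u2] := Hr x w wW => u3.
    have q1 : (1 - pW x w) / (1 - s) <= 1 by rewrite ler_pdivrMr // mul1r; lra.
    have q0 : 0 <= (1 - pW x w) / (1 - s) by apply: divr_ge0; lra.
    split; last 1 first; [lra | apply/andP; split; lra | by rewrite lexx ler01].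
  + move=> w1 w2 w1W w2W lt; split=> //.
    rewrite lerD2l lerN2 ler_pM2r ?invr_gt0 // lerD2l lerN2.
    apply: Hmono => //; exact: ltW.
  + by move=> w wW; field; rewrite gt_eqF.
  move=> ps [a0 [a1 [Hv Hg Hps H0 H1]]].
  by exists ps, a0, a1; split => // w _; rewrite H1.
Qed.
End P2.
Theorem proposition3 :
  (forall (R : realFieldType) (Xt : Type) (Z : finType) (p : Xt -> Z -> R),
     (forall (xt : Xt) (z0 : Z), 0 < psupZ p xt z0 /\ pinfZ p xt z0 < 1) ->
     forall (xt : Xt) (z : Z),
       ((exists ps a0 a1, [/\ valid1 ps a0 a1, generates1 p ps a0 a1 & a0 xt = 0]) ->
          forall s : R, ident1_no_fp p xt z s <-> p xt z <= s <= U1 p xt z) /\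
       ((exists ps a0 a1, [/\ valid1 ps a0 a1, generates1 p ps a0 a1 & a1 xt = 0]) ->
          forall s : R, ident1_no_fn p xt z s <-> L1 p xt z <= s <= p xt z)) /\
  (forall (R : realFieldType) (X : Type) (Ws : seq R) (pW : X -> R -> R),
     Ws != [::] ->
     (forall (x : X) (w : R), w \in Ws -> 0 < pW x w < 1) ->
     forall x : X,
       ((exists ps a0 a1, [/\ valid2 Ws ps a0 a1, generates2 Ws pW ps a0 a1
                            & forall w, w \in Ws -> a0 x w = 0]) ->
          forall s : R, ident2_no_fp Ws pW x s <->
                        supW Ws (pW x) <= s <= U2 Ws pW x) /\
       ((exists ps a0 a1, [/\ valid2 Ws ps a0 a1, generates2 Ws pW ps a0 a1
                            & forall w, w \in Ws -> a1 x w = 0]) ->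
          forall s : R, ident2_no_fn Ws pW x s <->
                        L2 Ws pW x <= s <= infW Ws (pW x))).
Proof.
split.
- move=> R Xt Z p Hb xt z; split; [exact: part1_fp | exact: part1_fn].
- move=> R X Ws pW Wn0 Hr x; split; [exact: part2_fp | exact: part2_fn].
Qed.
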